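(* Let $M \ge 1$ be an integer, let $d>0$ be the antenna element spacing and $\lambda>0$ the wavelength of an $M$-element one-dimensional uniform linear array, and let $\mathcal{T}$ be a (measurable) set of possible angles of departure. Put $$\mathcal{P} = \left\{ \psi : \psi = 2\pi \tfrac{d}{\lambda}\sin(\theta),\ \theta\in\mathcal{T}\right\}, \qquad \mu(\mathcal{P}) = \int_{-\pi}^{\pi} \mathbf{1}(\psi\in\mathcal{P})\, d\psi ,$$ and let the array manifold be $\mathcal{A}=\{\mathbf{a}(\psi):\psi\in\mathcal{P}\}$ with $\mathbf{a}(\psi) = [1,\ e^{j\psi},\ \ldots,\ e^{j(M-1)\psi}]^T\in\mathbb{C}^M$. Let $\mathcal{F}_k=\{\mathbf{f}_1,\ldots,\mathbf{f}_{N_k}\}\subset\mathbb{C}^M$ be any codebook of $N_k$ unit-norm vectors (in particular, any subcodebook of analog beamformers whose entries are $\frac{1}{\sqrt M}e^{j\varphi_m}$ with quantized phases $\varphi_m$). Define $$\chi(\mathcal{F}_k) = \inf_{\mathbf{a}\in\mathcal{A}}\ \max_{\mathbf{f}\in\mathcal{F}_k} |\mathbf{f}^*\mathbf{a}|^2 ,$$ where, in computing the infimum, only $\psi\in\mathcal{P}\cap[-\pi,\pi]$ are considered. Then $$\chi(\mathcal{F}_k) \le \min\left( \frac{2\pi N_k}{\mu(\mathcal{P})},\ M\right),$$ with the convention $2\pi N_k/0=+\infty$.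
   Context: $\mathbf{f}^*$ denotes the conjugate transpose of $\mathbf{f}$, $\|\cdot\|$ the Euclidean norm, $j=\sqrt{-1}$, and $\mathbf{1}(\cdot)$ the indicator function. The quantity $\chi(\mathcal{F}_k)$ is the smallest (worst-case over directions in the array manifold) beamforming gain achievable by the best codeword of $\mathcal{F}_k$; the associated covering distance is $\delta(\mathcal{F}_k)=\sqrt{1-\chi(\mathcal{F}_k)/M}$. *)

(* Defs.v *)
From Stdlib Require Import Reals Lra.
Open Scope R_scope.

(* Complex vectors in C^M are represented by their real and imaginary parts,
   indexed by m = 0 .. M-1. *)

Definition sqnorm (M : nat) (fre fim : nat -> R) : R :=
  sum_f_R0 (fun m => fre m ^ 2 + fim m ^ 2) (M - 1).

(* |f^* a(psi)|^2 where a(psi) = [1, e^{j psi}, ..., e^{j (M-1) psi}]^T :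
   f^* a = sum_m (fre m - j fim m)(cos(m psi) + j sin(m psi)). *)
Definition gain (M : nat) (fre fim : nat -> R) (psi : R) : R :=
  (sum_f_R0 (fun m => fre m * cos (INR m * psi) + fim m * sin (INR m * psi)) (M - 1)) ^ 2
  + (sum_f_R0 (fun m => fre m * sin (INR m * psi) - fim m * cos (INR m * psi)) (M - 1)) ^ 2.

Fixpoint maxgain (M : nat) (Fre Fim : nat -> nat -> R) (N : nat) (psi : R) : R :=
  match N with
  | O => 0
  | S n => Rmax (maxgain M Fre Fim n psi) (gain M (Fre n) (Fim n) psi)
  end.

Definition Pset (d lambda : R) (T : R -> Prop) (psi : R) : Prop :=
  exists theta, T theta /\ psi = 2 * PI * (d / lambda) * sin theta.

Definition cover_sum (A : R -> Prop) (s : R) : Prop :=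
  exists a b : nat -> R,
    (forall n, a n <= b n) /\
    (forall x, A x -> exists n, a n < x < b n) /\
    infinite_sum (fun n => b n - a n) s.

Definition outer_measure (A : R -> Prop) (m : R) : Prop :=
  (forall s, cover_sum A s -> m <= s) /\
  (forall eps, 0 < eps -> exists s, cover_sum A s /\ s < m + eps).

Definition lebesgue_measurable (T : R -> Prop) : Prop :=
  forall eps, 0 < eps ->
    exists G : R -> Prop, open_set G /\ (forall x, T x -> G x) /\
      exists s, cover_sum (fun x => G x /\ ~ T x) s /\ s < eps.

Definition is_inf (S : R -> Prop) (x : R) : Prop :=
  (forall y, S y -> x <= y) /\ (forall z, (forall y, S y -> z <= y) -> z <= x).

(* Main.v *)
Require Import Defs.
From Stdlib Require Import Reals Lra Lia Arith.
Open Scope R_scope.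

Fixpoint fs (n : nat) (f : nat -> R) : R :=
  match n with O => 0 | S n' => fs n' f + f n' end.

Lemma sfr0_fs f n : sum_f_R0 f n = fs (S n) f.
Proof. induction n; simpl in *. ring. rewrite IHn. simpl. ring. Qed.

Lemma fs_ext n f g : (forall i, (i < n)%nat -> f i = g i) -> fs n f = fs n g.
Proof. induction n; intros H; simpl. ring. rewrite IHn, H; auto. Qed.

Lemma fs_plus n f g : fs n (fun i => f i + g i) = fs n f + fs n g.
Proof. induction n; simpl. ring. rewrite IHn. ring. Qed.

Lemma fs_scal n c f : fs n (fun i => c * f i) = c * fs n f.
Proof. induction n; simpl. ring. rewrite IHn. ring. Qed.

Lemma fs_le n f g : (forall i, (i < n)%nat -> f i <= g i) -> fs n f <= fs n g.
Proof. induction n; intros H; simpl. lra. assert (f n <= g n) by auto.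
  assert (fs n f <= fs n g) by (apply IHn; auto). lra. Qed.

Lemma fs_const n c : fs n (fun _ => c) = INR n * c.
Proof. induction n; simpl fs. simpl; ring. rewrite IHn, S_INR. ring. Qed.

Lemma fs_swap n m (f : nat -> nat -> R) :
  fs n (fun i => fs m (fun j => f i j)) = fs m (fun j => fs n (fun i => f i j)).
Proof. induction n; simpl. induction m; simpl; auto. rewrite <- IHm; ring.
  rewrite IHn. rewrite <- fs_plus. reflexivity. Qed.

Lemma fs_delta n i g : (i < n)%nat ->
  fs n (fun j => if Nat.eq_dec i j then g j else 0) = g i.
Proof. induction n; intros H; simpl. lia.
  destruct (Nat.eq_dec i n).
  - subst. rewrite (fs_ext n _ (fun _ => 0)). rewrite fs_const. ring.
    intros k Hk. destruct (Nat.eq_dec n k); [lia|auto].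
  - rewrite IHn by lia. ring. Qed.

Lemma fs_mul n f g : fs n f * fs n g = fs n (fun i => fs n (fun j => f i * g j)).
Proof.
  transitivity (fs n (fun i => f i * fs n g)).
  - rewrite Rmult_comm, <- fs_scal. apply fs_ext; intros; ring.
  - apply fs_ext; intros. rewrite fs_scal. reflexivity. Qed.

Lemma fs_abs n f : Rabs (fs n f) <= fs n (fun i => Rabs (f i)).
Proof. induction n; simpl. rewrite Rabs_R0; lra.
  eapply Rle_trans. apply Rabs_triang. lra. Qed.

Lemma fs_nonneg n f : (forall i, (i < n)%nat -> 0 <= f i) -> 0 <= fs n f.
Proof. intros H. rewrite <- (Rmult_0_r (INR n)), <- fs_const. apply fs_le. auto. Qed.

Lemma tele_cos K a t : 2 * sin (t/2) * fs K (fun k => cos (a + INR k * t)) =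
  sin (a + INR K * t - t/2) - sin (a - t/2).
Proof. induction K. simpl fs. replace (a + INR 0 * t - t/2) with (a - t/2) by (simpl; ring). ring. simpl fs.
  rewrite Rmult_plus_distr_l, IHK. rewrite S_INR.
  replace (a + (INR K + 1) * t - t / 2) with ((a + INR K * t) + t/2) by field.
  replace (a + INR K * t - t / 2) with ((a + INR K * t) - t/2) by field.
  rewrite (sin_plus (a + INR K * t)), (sin_minus (a + INR K * t)). ring. Qed.

Lemma tele_sin K a t : 2 * sin (t/2) * fs K (fun k => sin (a + INR k * t)) =
  cos (a - t/2) - cos (a + INR K * t - t/2).
Proof. induction K. simpl fs. replace (a + INR 0 * t - t/2) with (a - t/2) by (simpl; ring). ring. simpl fs.
  rewrite Rmult_plus_distr_l, IHK. rewrite S_INR.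
  replace (a + (INR K + 1) * t - t / 2) with ((a + INR K * t) + t/2) by field.
  replace (a + INR K * t - t / 2) with ((a + INR K * t) - t/2) by field.
  rewrite (cos_plus (a + INR K * t)), (cos_minus (a + INR K * t)). ring. Qed.

Lemma orth_pos K n a : (0 < n)%nat -> (n < K)%nat ->
  let t := 2 * PI * INR n / INR K in
  fs K (fun k => cos (a + INR k * t)) = 0 /\ fs K (fun k => sin (a + INR k * t)) = 0.
Proof.
  intros Hn HK t.
  assert (HK0 : 0 < INR K) by (apply lt_0_INR; lia).
  assert (Hs : 0 < sin (t/2)).
  { assert (Hq : 0 < INR n / INR K < 1).
    { apply lt_INR in HK. assert (0 < INR n) by (apply lt_0_INR; lia). split.
      apply Rdiv_lt_0_compat; lra. apply Rmult_lt_reg_r with (INR K). lra.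
      unfold Rdiv. rewrite Rmult_assoc, Rinv_l by lra. lra. }
    replace (t/2) with (PI * (INR n / INR K)) by (unfold t; field; lra).
    pose proof PI_RGT_0. apply sin_gt_0. apply Rmult_lt_0_compat; lra.
    rewrite <- (Rmult_1_r PI) at 2. apply Rmult_lt_compat_l; lra. }
  assert (Ht : a + INR K * t - t/2 = (a - t/2) + 2 * INR n * PI).
  { unfold t. field. lra. }
  split.
  - pose proof (tele_cos K a t) as E. rewrite Ht, sin_period in E.
    apply Rmult_eq_reg_l with (2 * sin (t/2)). lra. lra.
  - pose proof (tele_sin K a t) as E. rewrite Ht, cos_period in E.
    apply Rmult_eq_reg_l with (2 * sin (t/2)). lra. lra.
Qed.

Lemma orth K m m' s : (m < K)%nat -> (m' < K)%nat ->
  fs K (fun k => cos ((INR m - INR m') * (s + INR k * (2 * PI / INR K)))) =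
    (if Nat.eq_dec m m' then INR K else 0) /\
  fs K (fun k => sin ((INR m - INR m') * (s + INR k * (2 * PI / INR K)))) = 0.
Proof.
  intros Hm Hm'. assert (HK0 : 0 < INR K) by (apply lt_0_INR; lia).
  destruct (Nat.eq_dec m m').
  - subst. split.
    + rewrite (fs_ext _ _ (fun _ => 1)). rewrite fs_const; ring.
      intros. replace (INR m' - INR m') with 0 by ring. rewrite Rmult_0_l, cos_0; auto.
    + rewrite (fs_ext _ _ (fun _ => 0)). rewrite fs_const; ring.
      intros. replace (INR m' - INR m') with 0 by ring. rewrite Rmult_0_l, sin_0; auto.
  - destruct (Nat.lt_ge_cases m' m) as [Hl|Hl].
    + destruct (orth_pos K (m - m') (INR (m - m') * s) ltac:(lia) ltac:(lia)) as [E1 E2].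
      rewrite minus_INR in E1, E2 by lia. split.
      * rewrite <- E1. apply fs_ext; intros. f_equal. field. lra.
      * rewrite <- E2. apply fs_ext; intros. f_equal. field. lra.
    + destruct (orth_pos K (m' - m) (INR (m' - m) * s) ltac:(lia) ltac:(lia)) as [E1 E2].
      rewrite minus_INR in E1, E2 by lia. split.
      * rewrite <- E1. apply fs_ext; intros.
        rewrite <- cos_neg. f_equal. field. lra.
      * rewrite (fs_ext _ _ (fun k => -1 * sin (INR (m' - m) * s + INR k * (2 * PI * (INR m' - INR m) / INR K)))).
        rewrite fs_scal, minus_INR, E2 by lia. ring.
        intros. rewrite minus_INR by lia. rewrite <- (Ropp_involutive (sin ((INR m - INR m') * _))).
        rewrite <- sin_neg. replace (-1 * _) with (- sin ((INR m' - INR m) * s + INR i * (2 * PI * (INR m' - INR m) / INR K))) by ring.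
        f_equal. f_equal. field. lra.
Qed.

Definition uu (fre fim : nat -> R) psi m := fre m * cos (INR m * psi) + fim m * sin (INR m * psi).
Definition vv (fre fim : nat -> R) psi m := fre m * sin (INR m * psi) - fim m * cos (INR m * psi).

Lemma gain_fs M fre fim psi : (1 <= M)%nat ->
  gain M fre fim psi = (fs M (uu fre fim psi))^2 + (fs M (vv fre fim psi))^2.
Proof. intros H. unfold gain. rewrite !sfr0_fs. replace (S (M-1)) with M by lia. reflexivity. Qed.

Lemma sqnorm_fs M fre fim : (1 <= M)%nat ->
  sqnorm M fre fim = fs M (fun m => fre m ^ 2 + fim m ^ 2).
Proof. intros H. unfold sqnorm. rewrite !sfr0_fs. replace (S (M-1)) with M by lia. reflexivity. Qed.

Lemma gain_expand M fre fim psi :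
  (fs M (uu fre fim psi))^2 + (fs M (vv fre fim psi))^2 =
  fs M (fun m => fs M (fun m' =>
     (fre m * fre m' + fim m * fim m') * cos ((INR m - INR m') * psi)
   + (fim m * fre m' - fre m * fim m') * sin ((INR m - INR m') * psi))).
Proof.
  simpl pow. rewrite !Rmult_1_r, !fs_mul, <- fs_plus. apply fs_ext; intros.
  rewrite <- fs_plus. apply fs_ext; intros i0 _. unfold uu, vv.
  replace ((INR i - INR i0) * psi) with (INR i * psi - INR i0 * psi) by ring. rewrite (cos_minus (INR i * psi)), (sin_minus (INR i * psi)). ring.
Qed.

Lemma gain_sum M K fre fim s : (1 <= M)%nat -> (M <= K)%nat ->
  fs K (fun k => gain M fre fim (s + INR k * (2 * PI / INR K))) = INR K * sqnorm M fre fim.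
Proof.
  intros HM HK. rewrite sqnorm_fs by auto.
  rewrite (fs_ext _ _ (fun k => fs M (fun m => fs M (fun m' =>
     (fre m * fre m' + fim m * fim m') * cos ((INR m - INR m') * (s + INR k * (2 * PI / INR K)))
   + (fim m * fre m' - fre m * fim m') * sin ((INR m - INR m') * (s + INR k * (2 * PI / INR K))))))).
  2:{ intros. rewrite gain_fs, gain_expand by auto. reflexivity. }
  rewrite fs_swap. rewrite <- fs_scal. apply fs_ext; intros m Hm.
  rewrite fs_swap.
  rewrite (fs_ext _ _ (fun m' => if Nat.eq_dec m m' then INR K * (fre m' ^ 2 + fim m' ^ 2) else 0)).
  - rewrite fs_delta by auto. reflexivity.
  - intros m' Hm'. rewrite fs_plus, !fs_scal.
    destruct (orth K m m' s ltac:(lia) ltac:(lia)) as [E1 E2]. rewrite E1, E2.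
    destruct (Nat.eq_dec m m'); [subst|]; ring.
Qed.

Lemma cs n x : (fs n x)^2 <= INR n * fs n (fun i => x i ^ 2).
Proof.
  induction n; cbn [fs]. simpl. lra.
  rewrite S_INR. set (S0 := fs n x) in *. set (Q := fs n (fun i => x i ^ 2)) in *.
  assert (HQ : 0 <= Q) by (apply fs_nonneg; intros; nra).
  assert (Hn : 0 <= INR n) by apply pos_INR.
  destruct (Req_dec (INR n) 0) as [E|E].
  - rewrite E in *. assert (S0 ^ 2 <= 0) by lra. assert (S0 = 0) by nra. rewrite H0. nra.
  - assert (2 * S0 * x n <= INR n * x n ^ 2 + Q).
    { assert (0 <= (S0 - INR n * x n)^2) by apply pow2_ge_0.
      apply Rmult_le_reg_l with (INR n). lra. nra. }
    nra.
Qed.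

Lemma uv_sq fre fim psi m : uu fre fim psi m ^ 2 + vv fre fim psi m ^ 2 = fre m ^ 2 + fim m ^ 2.
Proof. unfold uu, vv. pose proof (sin2_cos2 (INR m * psi)). unfold Rsqr in H.
  replace (fre m ^ 2 + fim m ^ 2) with ((fre m ^ 2 + fim m ^ 2) * (sin (INR m * psi) * sin (INR m * psi) + cos (INR m * psi) * cos (INR m * psi))) by (rewrite H; ring).
  ring. Qed.

Lemma gain_le M fre fim psi : (1 <= M)%nat -> gain M fre fim psi <= INR M * sqnorm M fre fim.
Proof.
  intros HM. rewrite gain_fs, sqnorm_fs by auto.
  pose proof (cs M (uu fre fim psi)). pose proof (cs M (vv fre fim psi)).
  rewrite (fs_ext M (fun m => fre m ^ 2 + fim m ^ 2) (fun m => uu fre fim psi m ^ 2 + vv fre fim psi m ^ 2)).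
  rewrite fs_plus. lra. intros; symmetry; apply uv_sq.
Qed.

Lemma gain_nonneg M fre fim psi : 0 <= gain M fre fim psi.
Proof. unfold gain. nra. Qed.

Lemma abs_sin_pos x : 0 < x -> Rabs (sin x) <= x.
Proof.
  intros H. pose proof (sin_lt_x x H). apply Rabs_le. split; [|lra].
  pose proof (SIN_bound x). destruct (Rle_dec 1 x). lra.
  pose proof PI_RGT_0. pose proof PI2_1.
  pose proof (sin_ge_0 x ltac:(lra) ltac:(lra)). lra.
Qed.

Lemma abs_sin_le x : Rabs (sin x) <= Rabs x.
Proof.
  destruct (Rtotal_order x 0) as [H|[H|H]].
  - pose proof (abs_sin_pos (- x) ltac:(lra)). rewrite sin_neg, Rabs_Ropp in H0.
    rewrite (Rabs_left x); lra.
  - subst. rewrite sin_0. lra.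
  - pose proof (abs_sin_pos x H). rewrite (Rabs_right x); lra.
Qed.

Lemma cos_lip x y : Rabs (cos x - cos y) <= Rabs (x - y).
Proof.
  rewrite form2. rewrite !Rabs_mult. pose proof (abs_sin_le ((x - y)/2)).
  pose proof (SIN_bound ((x+y)/2)). assert (Rabs (sin ((x+y)/2)) <= 1) by (apply Rabs_le; lra).
  replace (Rabs (x - y)) with (Rabs (-2) * Rabs ((x-y)/2)).
  2:{ rewrite <- Rabs_mult, <- (Rabs_Ropp (x - y)). f_equal. field. }
  pose proof (Rabs_pos (sin ((x - y) / 2))). pose proof (Rabs_pos (sin ((x + y) / 2))).
  replace (Rabs (-2)) with 2 by (rewrite Rabs_left; lra). nra.
Qed.

Lemma sin_lip x y : Rabs (sin x - sin y) <= Rabs (x - y).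
Proof.
  rewrite form4. rewrite !Rabs_mult. pose proof (abs_sin_le ((x - y)/2)).
  pose proof (COS_bound ((x+y)/2)). assert (Rabs (cos ((x+y)/2)) <= 1) by (apply Rabs_le; lra).
  replace (Rabs (x - y)) with (Rabs 2 * Rabs ((x-y)/2)).
  2:{ rewrite <- Rabs_mult. f_equal. field. }
  pose proof (Rabs_pos (sin ((x - y) / 2))). pose proof (Rabs_pos (cos ((x + y) / 2))).
  replace (Rabs 2) with 2 by (rewrite Rabs_right; lra). nra.
Qed.

Lemma fs_minus n f g : fs n (fun i => f i - g i) = fs n f - fs n g.
Proof. induction n; simpl. ring. rewrite IHn. ring. Qed.

Lemma mul_lip m p q : Rabs (INR m * p - INR m * q) = INR m * Rabs (p - q).
Proof. rewrite <- Rmult_minus_distr_l, Rabs_mult, Rabs_right. auto. apply Rle_ge, pos_INR. Qed.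

Lemma uu_lip fre fim p q m : Rabs (uu fre fim p m - uu fre fim q m) <=
  (Rabs (fre m) + Rabs (fim m)) * (INR m * Rabs (p - q)).
Proof.
  unfold uu. replace (fre m * cos (INR m * p) + fim m * sin (INR m * p) -
    (fre m * cos (INR m * q) + fim m * sin (INR m * q))) with
    (fre m * (cos (INR m * p) - cos (INR m * q)) + fim m * (sin (INR m * p) - sin (INR m * q))) by ring.
  eapply Rle_trans. apply Rabs_triang. rewrite !Rabs_mult.
  pose proof (cos_lip (INR m * p) (INR m * q)). pose proof (sin_lip (INR m * p) (INR m * q)).
  rewrite mul_lip in H, H0. pose proof (Rabs_pos (fre m)). pose proof (Rabs_pos (fim m)). nra.
Qed.

Lemma vv_lip fre fim p q m : Rabs (vv fre fim p m - vv fre fim q m) <=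
  (Rabs (fre m) + Rabs (fim m)) * (INR m * Rabs (p - q)).
Proof.
  unfold vv. replace (fre m * sin (INR m * p) - fim m * cos (INR m * p) -
    (fre m * sin (INR m * q) - fim m * cos (INR m * q))) with
    (fre m * (sin (INR m * p) - sin (INR m * q)) + (- fim m) * (cos (INR m * p) - cos (INR m * q))) by ring.
  eapply Rle_trans. apply Rabs_triang. rewrite !Rabs_mult, Rabs_Ropp.
  pose proof (cos_lip (INR m * p) (INR m * q)). pose proof (sin_lip (INR m * p) (INR m * q)).
  rewrite mul_lip in H, H0. pose proof (Rabs_pos (fre m)). pose proof (Rabs_pos (fim m)). nra.
Qed.

Lemma uu_bd fre fim p m : Rabs (uu fre fim p m) <= Rabs (fre m) + Rabs (fim m).
Proof. unfold uu. eapply Rle_trans. apply Rabs_triang. rewrite !Rabs_mult.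
  pose proof (COS_bound (INR m * p)). pose proof (SIN_bound (INR m * p)).
  assert (Rabs (cos (INR m * p)) <= 1) by (apply Rabs_le; lra).
  assert (Rabs (sin (INR m * p)) <= 1) by (apply Rabs_le; lra).
  pose proof (Rabs_pos (fre m)). pose proof (Rabs_pos (fim m)).
  pose proof (Rabs_pos (sin (INR m * p))). pose proof (Rabs_pos (cos (INR m * p))). nra. Qed.

Lemma vv_bd fre fim p m : Rabs (vv fre fim p m) <= Rabs (fre m) + Rabs (fim m).
Proof. unfold vv. unfold Rminus. eapply Rle_trans. apply Rabs_triang. rewrite Rabs_Ropp, !Rabs_mult.
  pose proof (COS_bound (INR m * p)). pose proof (SIN_bound (INR m * p)).
  assert (Rabs (cos (INR m * p)) <= 1) by (apply Rabs_le; lra).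
  assert (Rabs (sin (INR m * p)) <= 1) by (apply Rabs_le; lra).
  pose proof (Rabs_pos (fre m)). pose proof (Rabs_pos (fim m)).
  pose proof (Rabs_pos (sin (INR m * p))). pose proof (Rabs_pos (cos (INR m * p))). nra. Qed.

Definition C0 M (fre fim : nat -> R) := fs M (fun m => Rabs (fre m) + Rabs (fim m)).

Lemma C0_nonneg M fre fim : 0 <= C0 M fre fim.
Proof. apply fs_nonneg; intros. pose proof (Rabs_pos (fre i)). pose proof (Rabs_pos (fim i)). lra. Qed.

Lemma sum_lip M (w : R -> nat -> R) fre fim p q :
  (forall m, Rabs (w p m - w q m) <= (Rabs (fre m) + Rabs (fim m)) * (INR m * Rabs (p - q))) ->
  Rabs (fs M (w p) - fs M (w q)) <= INR M * C0 M fre fim * Rabs (p - q).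
Proof.
  intros H. rewrite <- fs_minus. eapply Rle_trans. apply fs_abs.
  replace (INR M * C0 M fre fim * Rabs (p - q)) with
    (fs M (fun m => (Rabs (fre m) + Rabs (fim m)) * (INR M * Rabs (p - q)))).
  2:{ unfold C0. rewrite (fs_ext M _ (fun m => (INR M * Rabs (p - q)) * (Rabs (fre m) + Rabs (fim m)))).
      rewrite fs_scal. ring. intros; ring. }
  apply fs_le. intros m Hm. eapply Rle_trans. apply H.
  apply Rmult_le_compat_l. pose proof (Rabs_pos (fre m)). pose proof (Rabs_pos (fim m)). lra.
  apply Rmult_le_compat_r. apply Rabs_pos. apply le_INR; lia.
Qed.

Lemma sum_bd M (w : nat -> R) fre fim :
  (forall m, Rabs (w m) <= Rabs (fre m) + Rabs (fim m)) -> Rabs (fs M w) <= C0 M fre fim.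
Proof. intros H. eapply Rle_trans. apply fs_abs. apply fs_le. auto. Qed.

Definition Lf M fre fim := 4 * INR M * (C0 M fre fim) ^ 2.

Lemma gain_lip M fre fim p q : (1 <= M)%nat ->
  Rabs (gain M fre fim p - gain M fre fim q) <= Lf M fre fim * Rabs (p - q).
Proof.
  intros HM. rewrite !gain_fs by auto. unfold Lf.
  pose proof (sum_lip M (uu fre fim) fre fim p q (uu_lip fre fim p q)) as H1.
  pose proof (sum_lip M (vv fre fim) fre fim p q (vv_lip fre fim p q)) as H2.
  pose proof (sum_bd M (uu fre fim p) fre fim (uu_bd fre fim p)) as H3.
  pose proof (sum_bd M (uu fre fim q) fre fim (uu_bd fre fim q)) as H4.
  pose proof (sum_bd M (vv fre fim p) fre fim (vv_bd fre fim p)) as H5.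
  pose proof (sum_bd M (vv fre fim q) fre fim (vv_bd fre fim q)) as H6.
  set (A := fs M (uu fre fim p)) in *. set (A' := fs M (uu fre fim q)) in *.
  set (B := fs M (vv fre fim p)) in *. set (B' := fs M (vv fre fim q)) in *.
  set (C := C0 M fre fim) in *. set (d := Rabs (p - q)) in *.
  replace (A ^ 2 + B ^ 2 - (A' ^ 2 + B' ^ 2)) with ((A - A') * (A + A') + (B - B') * (B + B')) by ring.
  eapply Rle_trans. apply Rabs_triang. rewrite !Rabs_mult.
  assert (Rabs (A + A') <= 2 * C) by (eapply Rle_trans; [apply Rabs_triang| lra]).
  assert (Rabs (B + B') <= 2 * C) by (eapply Rle_trans; [apply Rabs_triang| lra]).
  assert (0 <= INR M * C * d).
  { unfold d, C. pose proof (C0_nonneg M fre fim). pose proof (pos_INR M). pose proof (Rabs_pos (p - q)).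
    apply Rmult_le_pos; [apply Rmult_le_pos|]; lra. }
  pose proof (Rabs_pos (A - A')). pose proof (Rabs_pos (B - B')).
  pose proof (Rabs_pos (A + A')). pose proof (Rabs_pos (B + B')).
  assert (Rabs (A - A') * Rabs (A + A') <= (INR M * C * d) * (2 * C)) by (apply Rmult_le_compat; lra).
  assert (Rabs (B - B') * Rabs (B + B') <= (INR M * C * d) * (2 * C)) by (apply Rmult_le_compat; lra).
  nra.
Qed.

Definition GG M Fre Fim N psi := fs N (fun i => gain M (Fre i) (Fim i) psi).
Definition LG M (Fre Fim : nat -> nat -> R) N := fs N (fun i => Lf M (Fre i) (Fim i)).

Lemma G_lip M Fre Fim N p q : (1 <= M)%nat ->
  Rabs (GG M Fre Fim N p - GG M Fre Fim N q) <= LG M Fre Fim N * Rabs (p - q).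
Proof.
  intros HM. unfold GG, LG. rewrite <- fs_minus. eapply Rle_trans. apply fs_abs.
  rewrite Rmult_comm, <- fs_scal. apply fs_le. intros. rewrite Rmult_comm. apply gain_lip; auto.
Qed.

Lemma maxgain_le_G M Fre Fim N psi : maxgain M Fre Fim N psi <= GG M Fre Fim N psi.
Proof.
  unfold GG. induction N; simpl. lra.
  pose proof (gain_nonneg M (Fre N) (Fim N) psi).
  assert (0 <= fs N (fun i => gain M (Fre i) (Fim i) psi)) by (apply fs_nonneg; intros; apply gain_nonneg).
  apply Rmax_lub; lra.
Qed.

Lemma maxgain_le_M M Fre Fim N psi : (1 <= M)%nat ->
  (forall i, (i < N)%nat -> sqnorm M (Fre i) (Fim i) = 1) -> maxgain M Fre Fim N psi <= INR M.
Proof.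
  intros HM H. induction N; simpl. apply pos_INR.
  apply Rmax_lub. apply IHN; auto.
  pose proof (gain_le M (Fre N) (Fim N) psi HM). rewrite H in H0 by lia. lra.
Qed.

Lemma fs_tail f K n : (forall n, (K <= n)%nat -> f n = 0) -> (K <= n)%nat -> fs n f = fs K f.
Proof. intros H. induction n; intros Hn. replace K with 0%nat by lia. auto.
  destruct (Nat.eq_dec K (S n)). subst; auto. simpl. rewrite IHn by lia. rewrite H by lia. ring. Qed.

Lemma inf_sum_fin f K : (forall n, (K <= n)%nat -> f n = 0) -> infinite_sum f (fs K f).
Proof.
  intros H eps Heps. exists K. intros n Hn. rewrite sfr0_fs, (fs_tail f K (S n)) by (auto; lia).
  unfold R_dist. rewrite Rminus_diag, Rabs_R0. lra.
Qed.

Lemma grid_cover a h K y : 0 < h -> (0 < K)%nat -> a <= y <= a + INR K * h ->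
  exists k, (k < K)%nat /\ a + INR k * h <= y <= a + INR k * h + h.
Proof.
  intros Hh. induction K; intros HK Hy. lia.
  destruct (Nat.eq_dec K 0). subst. exists 0%nat. simpl in *. split. lia. lra.
  destruct (Rle_dec y (a + INR K * h)).
  - destruct IHK as [k [Hk1 Hk2]]. lia. lra. exists k. split; [lia|auto].
  - exists K. rewrite S_INR in Hy. split. lia. lra.
Qed.

Lemma LG_nonneg M Fre Fim N : 0 <= LG M Fre Fim N.
Proof. apply fs_nonneg; intros. unfold Lf. pose proof (pos_INR M).
  assert (0 <= C0 M (Fre i) (Fim i) ^ 2) by apply pow2_ge_0. nra. Qed.

Lemma bound_K M Fre Fim N (S : R -> Prop) mu c K dl :
  (1 <= M)%nat -> (M <= K)%nat ->
  (forall i, (i < N)%nat -> sqnorm M (Fre i) (Fim i) = 1) ->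
  outer_measure S mu ->
  (forall y, S y -> - PI <= y <= PI /\ c <= maxgain M Fre Fim N y) ->
  0 < dl -> LG M Fre Fim N * (2 * PI / INR K) <= c ->
  mu * (c - LG M Fre Fim N * (2 * PI / INR K)) <= INR K * INR N * (2 * PI / INR K + 2 * dl).
Proof.
  intros HM HMK Hn [Hom _] HS Hdl Hc.
  assert (HK : 0 < INR K) by (apply lt_0_INR; lia).
  pose proof PI_RGT_0.
  set (h := 2 * PI / INR K) in *.
  assert (Hh : 0 < h) by (unfold h; apply Rdiv_lt_0_compat; lra).
  set (L := LG M Fre Fim N) in *. pose proof (LG_nonneg M Fre Fim N) as HL. fold L in HL.
  set (x := fun k => - PI + INR k * h).
  set (w := fun k => if lt_dec k K then if Rle_dec (c - L * h) (GG M Fre Fim N (x k)) then 1 else 0 else 0).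
  assert (Hw : forall k, 0 <= w k <= 1).
  { intros k. unfold w. destruct (lt_dec k K); [destruct Rle_dec|]; lra. }
  assert (Hcov : cover_sum S (fs K (fun n => w n * (x n + h + dl) - w n * (x n - dl)))).
  { exists (fun n => w n * (x n - dl)), (fun n => w n * (x n + h + dl)). split; [|split].
    - intros n. specialize (Hw n). nra.
    - intros y Sy. destruct (HS y Sy) as [Hy Hcy].
      destruct (grid_cover (- PI) h K y Hh ltac:(lia)) as [k [Hk1 Hk2]].
      { unfold h. split. lra. replace (- PI + INR K * (2 * PI / INR K)) with PI by (field; lra). lra. }
      exists k. assert (w k = 1).
      { unfold w. destruct (lt_dec k K); [|lia]. destruct Rle_dec as [|Hn']; auto. exfalso. apply Hn'.
        pose proof (G_lip M Fre Fim N (x k) y HM) as G1. fold L in G1.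
        pose proof (maxgain_le_G M Fre Fim N y).
        assert (Rabs (x k - y) <= h) by (unfold x; apply Rabs_le; lra).
        pose proof (Rle_abs (GG M Fre Fim N y - GG M Fre Fim N (x k))) as G2.
        rewrite Rabs_minus_sym in G2.
        assert (L * Rabs (x k - y) <= L * h) by (apply Rmult_le_compat_l; lra).
        lra. }
      rewrite H0. unfold x in *. lra.
    - apply inf_sum_fin. intros n Hn'. unfold w. destruct (lt_dec n K); [lia|]. ring. }
  pose proof (Hom _ Hcov) as Hmu.
  rewrite (fs_ext _ _ (fun n => (h + 2 * dl) * w n)) in Hmu by (intros; ring).
  rewrite fs_scal in Hmu.
  assert (Hcount : fs K (fun k => (c - L * h) * w k) <= INR N * INR K).
  { eapply Rle_trans with (fs K (fun k => GG M Fre Fim N (x k))).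
    - apply fs_le. intros k Hk. unfold w. destruct (lt_dec k K); [|lia].
      destruct Rle_dec. lra. rewrite Rmult_0_r. apply fs_nonneg. intros; apply gain_nonneg.
    - unfold GG. rewrite fs_swap. rewrite <- fs_const. apply Req_le. apply fs_ext. intros i Hi.
      unfold x. rewrite gain_sum by auto. rewrite Hn by auto. ring. }
  rewrite fs_scal in Hcount.
  assert (0 <= c - L * h) by lra.
  assert (mu * (c - L * h) <= (h + 2 * dl) * fs K w * (c - L * h)) by (apply Rmult_le_compat_r; lra).
  assert (0 <= h + 2 * dl) by lra.
  assert ((h + 2 * dl) * ((c - L * h) * fs K w) <= (h + 2 * dl) * (INR N * INR K)) by (apply Rmult_le_compat_l; lra).
  nra.
Qed.

Theorem lemma1 (M : nat) (d lambda : R) (T : R -> Prop)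
  (N : nat) (Fre Fim : nat -> nat -> R) :
  (1 <= M)%nat -> 0 < d -> 0 < lambda ->
  lebesgue_measurable T ->
  (1 <= N)%nat ->
  (forall i, (i < N)%nat -> sqnorm M (Fre i) (Fim i) = 1) ->
  (exists psi, Pset d lambda T psi /\ - PI <= psi <= PI) ->
  forall mu : R,
  outer_measure (fun psi => Pset d lambda T psi /\ - PI <= psi <= PI) mu ->
  forall chi : R,
  is_inf (fun v => exists psi, (Pset d lambda T psi /\ - PI <= psi <= PI) /\
                              v = maxgain M Fre Fim N psi) chi ->
  chi <= INR M /\ (0 < mu -> chi <= 2 * PI * INR N / mu).
Proof.
  intros HM Hd Hl HT HN Hn [psi0 Hpsi0] mu Hom chi [Hlow _].
  split.
  { eapply Rle_trans. apply Hlow. exists psi0. split; eauto. apply maxgain_le_M; auto. }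
  intros Hmu. pose proof PI_RGT_0.
  assert (HN0 : 0 < INR N) by (apply lt_0_INR; lia).
  destruct (Rle_dec chi 0) as [Hc|Hc].
  { assert (0 < 2 * PI * INR N / mu) by (apply Rdiv_lt_0_compat; nra). lra. }
  apply Rnot_le_lt in Hc.
  assert (Key : mu * chi <= 2 * PI * INR N).
  { apply Rnot_lt_le. intros Hgap.
    set (gap := mu * chi - 2 * PI * INR N).
    set (L := LG M Fre Fim N). pose proof (LG_nonneg M Fre Fim N) as HL. fold L in HL.
    destruct (INR_unbounded (INR M + 2 * PI * L / chi + 2 * PI * mu * L / gap + 1)) as [K HK].
    assert (Hg : 0 < gap) by (unfold gap; lra). pose proof (pos_INR M).
    assert (A1 : 0 <= 2 * PI * L / chi) by (apply Rmult_le_pos; [nra| left; apply Rinv_0_lt_compat; lra]).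
    assert (A2 : 0 <= 2 * PI * mu * L / gap).
    { apply Rmult_le_pos. apply Rmult_le_pos. nra. lra. left; apply Rinv_0_lt_compat; lra. }
    assert (HMK : (M < K)%nat) by (apply INR_lt; lra).
    assert (HK0 : 0 < INR K) by (apply lt_0_INR; lia).
    set (h := 2 * PI / INR K).
    assert (HKh : INR K * h = 2 * PI) by (unfold h; field; lra).
    assert (Hh : 0 < h) by (unfold h; apply Rdiv_lt_0_compat; lra).
    assert (B1 : 2 * PI * L < chi * INR K).
    { assert (chi * (2 * PI * L / chi) = 2 * PI * L) by (field; lra).
      assert (chi * (2 * PI * L / chi) < chi * INR K) by (apply Rmult_lt_compat_l; lra). lra. }
    assert (B2 : 2 * PI * mu * L < gap * INR K).
    { assert (gap * (2 * PI * mu * L / gap) = 2 * PI * mu * L) by (field; lra).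
      assert (gap * (2 * PI * mu * L / gap) < gap * INR K) by (apply Rmult_lt_compat_l; lra). lra. }
    assert (C1 : L * h < chi).
    { apply Rmult_lt_reg_r with (INR K). lra. replace (L * h * INR K) with (L * (INR K * h)) by ring. rewrite HKh. rewrite (Rmult_comm _ (2 * PI)). lra. }
    assert (C2 : mu * L * h < gap).
    { apply Rmult_lt_reg_r with (INR K). lra. replace (mu * L * h * INR K) with (mu * L * (INR K * h)) by ring. rewrite HKh. rewrite (Rmult_comm _ (2 * PI)). lra. }
    set (dl := (gap - mu * L * h) / (4 * INR K * INR N + 1)).
    assert (HKN : 0 <= INR K * INR N) by nra.
    assert (Hdl : 0 < dl) by (apply Rdiv_lt_0_compat; lra).
    assert (Hdl2 : 2 * INR K * INR N * dl < gap - mu * L * h).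
    { unfold dl. apply Rmult_lt_reg_r with (4 * INR K * INR N + 1). lra.
      field_simplify. 2: lra. nra. }
    pose proof (bound_K M Fre Fim N _ mu chi K dl HM ltac:(lia) Hn Hom) as BK.
    fold L h in BK.
    assert (mu * (chi - L * h) <= INR K * INR N * (h + 2 * dl)).
    { apply BK; auto. 2: lra. intros y [Py Hy]. split; auto. apply Hlow. exists y. auto. }
    assert (INR K * INR N * (h + 2 * dl) = 2 * PI * INR N + 2 * INR K * INR N * dl).
    { replace (INR K * INR N * (h + 2 * dl)) with ((INR K * h) * INR N + 2 * INR K * INR N * dl) by ring.
      rewrite HKh. ring. }
    unfold gap in *. nra. }
  apply Rmult_le_reg_r with mu. lra.
  replace (2 * PI * INR N / mu * mu) with (2 * PI * INR N) by (field; lra). lra.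
Qed.
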